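(* Let $I=I(G)\subset S$ be an edge ideal with linear quotients with respect to the order $u_1,\dots,u_m$ of its minimal generators, and let $P=(x_{j_1},\dots,x_{j_t})$ with $j_1<\dots<j_t$. Consider the total order on the products $x_{j_1}u_1>\cdots>x_{j_t}u_1>x_{j_1}u_2>\cdots>x_{j_t}u_2>\cdots>x_{j_1}u_m>\cdots>x_{j_t}u_m$. Every $v\in\mathcal{G}(PI)$ equals at least one product $x_{j_p}u_q$; call the largest such product in this order the standard presentation of $v$, and order $\mathcal{G}(PI)$ by declaring $v>v'$ if the standard presentation of $v$ is larger than that of $v'$. Then $PI$ has linear quotients with respect to this order (listed from largest to smallest).
   Context: $S=K[x_1,\dots,x_n]$, $I(G)=(x_ix_j:\{x_i,x_j\}\in E(G))$; $\mathcal{G}(J)$ is the minimal monomial generating set of a monomial ideal $J$. $J$ has linear quotients with respect to an ordering $w_1,\dots,w_s$ of $\mathcal{G}(J)$ if for each $i\ge2$ the colon ideal $(w_1,\dots,w_{i-1}):(w_i)$ is generated by variables. *)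

(* Defs.v *)
(* Monomials in S = K[x_0,...,x_{n-1}] are represented by
   their exponent vectors; monomial ideals are handled through their sets of
   monomials (a monomial ideal is determined by the monomials it contains). *)
From mathcomp Require Import all_boot all_order.
Set Implicit Arguments. Unset Strict Implicit. Unset Printing Implicit Defensive.

Definition mon (n : nat) := {ffun 'I_n -> nat}.

Definition var n (i : 'I_n) : mon n := [ffun k => (k == i : nat)].

Definition mmul n (a b : mon n) : mon n := [ffun k => a k + b k].

Definition mdvd n (a b : mon n) : bool := [forall k, a k <= b k].

Definition in_mideal n (gens : seq (mon n)) (m : mon n) : bool :=
  has (fun g => mdvd g m) gens.

Definition mingens n (gens : seq (mon n)) : seq (mon n) :=
  [seq v <- undup gens | ~~ has (fun w => mdvd w v && (w != v)) gens].

Definition colon_mon n (gens : seq (mon n)) (w : mon n) : mon n -> bool :=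
  fun m => in_mideal gens (mmul m w).

Definition gen_by_vars n (J : mon n -> bool) : Prop :=
  exists V : {set 'I_n}, forall m : mon n,
    J m = [exists k in V, 0 < m k].

Definition mon1 n : mon n := [ffun _ => 0].

Definition linear_quotients n (ws : seq (mon n)) : Prop :=
  forall i, 0 < i < size ws ->
    gen_by_vars (colon_mon (take i ws) (nth (mon1 n) ws i)).

Definition edge_mon n (e : rel 'I_n) (u : mon n) : Prop :=
  exists i j, e i j /\ u = mmul (var i) (var j).

(* the products x_{j_1}u_1 > ... > x_{j_t}u_1 > x_{j_1}u_2 > ... > x_{j_t}u_m,
   listed from largest to smallest *)
Definition products n (js : seq 'I_n) (us : seq (mon n)) : seq (mon n) :=
  [seq mmul (var j) u | u <- us, j <- js].

(* Main.v *)
Require Import Defs.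
From mathcomp Require Import all_boot all_order.
From mathcomp Require Import zify.
Set Implicit Arguments. Unset Strict Implicit. Unset Printing Implicit Defensive.

Lemma mmulE n (a b : mon n) k : mmul a b k = a k + b k.
Proof. by rewrite ffunE. Qed.
Lemma varE n (i k : 'I_n) : var i k = (k == i).
Proof. by rewrite ffunE. Qed.
Lemma mdvdP n (a b : mon n) : reflect (forall k, a k <= b k) (mdvd a b).
Proof. exact: forallP. Qed.
Lemma mdvd_trans n (a b c : mon n) : mdvd a b -> mdvd b c -> mdvd a c.
Proof. move=> /mdvdP H1 /mdvdP H2; apply/mdvdP=> k; exact: leq_trans (H1 k) (H2 k). Qed.

Definition deg n (a : mon n) := \sum_k a k.
Lemma deg_mmul n (a b : mon n) : deg (mmul a b) = deg a + deg b.
Proof. rewrite /deg -big_split /=; apply: eq_bigr => k _; by rewrite mmulE. Qed.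
Lemma deg_var n (i : 'I_n) : deg (var i) = 1.
Proof.
rewrite /deg (bigD1 i) //= varE eqxx big1 // => k /negbTE; by rewrite varE => ->.
Qed.
Lemma mdvd_deg n (a b : mon n) : mdvd a b -> deg a = deg b -> a = b.
Proof.
move=> /mdvdP H Hd.
have : \sum_k (b k - a k) = 0.
  apply/eqP; rewrite -(eqn_add2l (deg a)) addn0 {2}Hd /deg -big_split /=.
  by apply/eqP/eq_bigr => k _; rewrite subnKC.
move/eqP; rewrite sum_nat_eq0 => /forallP H2.
apply/ffunP => k; apply/eqP; rewrite eqn_leq H /=.
by rewrite -subn_eq0; exact: (implyP (H2 k)).
Qed.

Lemma le1 n (y z k : 'I_n) : y != z -> (k == y) + (k == z) <= 1.
Proof. move=> yz; case: (eqVneq k y) => [->|]; first by rewrite (negbTE yz). by case: (k == z). Qed.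

Lemma final_key n (j j0 w o : 'I_n) : j != w -> w != o ->
   (mmul (var j0) (mmul (var j) (var o)) w < mmul (var j) (mmul (var j0) (var w)) w)
     && mdvd (mmul (var j) (mmul (var j0) (var w))) (mmul (var w) (mmul (var j0) (mmul (var j) (var o)))).
Proof.
move=> njw nwo; apply/andP; split.
  rewrite !mmulE !varE eqxx [w == j]eq_sym (negbTE njw) (negbTE nwo).
  move: (w == j0) => p. lia.
apply/mdvdP => k; rewrite !mmulE !varE.
move: (k == j) (k == j0) (k == w) (k == o) => p q r s. lia.
Qed.

Lemma mmulC n (a b : mon n) : mmul a b = mmul b a.
Proof. by apply/ffunP => k; rewrite !mmulE addnC. Qed.
Lemma mmulA n (a b c : mon n) : mmul a (mmul b c) = mmul (mmul a b) c.
Proof. by apply/ffunP => k; rewrite !mmulE addnA. Qed.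
Lemma mmulCA n (a b c : mon n) : mmul a (mmul b c) = mmul b (mmul a c).
Proof. by apply/ffunP => k; rewrite !mmulE addnCA. Qed.

Lemma final_close n (j j0 w o : 'I_n) : j != w ->
  mmul (var j) (mmul (var j0) (var w)) != mmul (var j0) (mmul (var j) (var o)) ->
  exists w', (mmul (var j0) (mmul (var j) (var o)) w' < mmul (var j) (mmul (var j0) (var w)) w')
     && mdvd (mmul (var j) (mmul (var j0) (var w))) (mmul (var w') (mmul (var j0) (mmul (var j) (var o)))).
Proof.
move=> njw Hne; exists w; apply: final_key => //.
by apply: contra Hne => /eqP ->; rewrite mmulCA.
Qed.

Lemma final n (j j0 y z a b : 'I_n) : y != z ->
  mmul (var y) (var z) j0 < mmul (var a) (var b) j0 ->
  mmul (var j) (mmul (var a) (var b)) j <= mmul (var j0) (mmul (var y) (var z)) j ->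
  mmul (var j) (mmul (var a) (var b)) != mmul (var j0) (mmul (var y) (var z)) ->
  exists w, (mmul (var j0) (mmul (var y) (var z)) w < mmul (var j) (mmul (var a) (var b)) w)
     && mdvd (mmul (var j) (mmul (var a) (var b))) (mmul (var w) (mmul (var j0) (mmul (var y) (var z)))).
Proof.
move=> yz H1 H2 Hne.
have l1 := le1 j yz.
case: (eqVneq j j0) => [Ej | njj0].
  exfalso; move: H1 H2; rewrite Ej !mmulE !varE eqxx.
  move: (j0 == a) (j0 == b) (j0 == y) (j0 == z) => p q r s. lia.
move: H1 H2 l1; rewrite !mmulE !varE eqxx (negbTE njj0) => H1 H2 l1.
have nja : j != a.
  apply/negP => /eqP E; move: H2 l1; rewrite -E eqxx.
  move: (j == b) (j == y) (j == z) => p q r. lia.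
have njb : j != b.
  apply/negP => /eqP E; move: H2 l1; rewrite -E eqxx.
  move: (j == a) (j == y) (j == z) => p q r. lia.
have jyz : (j == y) || (j == z).
  move: H2; rewrite (negbTE nja) (negbTE njb).
  by case: (j == y); case: (j == z).
have j0ab : (j0 == a) || (j0 == b).
  move: H1; case: (j0 == a); case: (j0 == b) => //.
have [w [njw Ew]] : exists w, j != w /\ mmul (var a) (var b) = mmul (var j0) (var w).
  case/orP: j0ab => /eqP <-; [by exists b | by exists a; rewrite mmulC].
have [o Eo] : exists o, mmul (var y) (var z) = mmul (var j) (var o).
  case/orP: jyz => /eqP <-; [by exists z | by exists y; rewrite mmulC].
rewrite Ew Eo; apply: final_close => //.
by rewrite -Ew -Eo.
Qed.

Lemma gbv_elim n (G : seq (mon n)) (w g : mon n) :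
  gen_by_vars (colon_mon G w) -> g \in G ->
  exists k, (w k < g k) && in_mideal G (mmul (var k) w).
Proof.
case=> V HV gG.
have : colon_mon G w [ffun k => g k - w k].
  apply/hasP; exists g => //; apply/mdvdP => k; rewrite mmulE ffunE.
  move: (g k) (w k) => p q; lia.
rewrite HV => /existsP [k /andP [kV]]; rewrite ffunE subn_gt0 => lt.
exists k; rewrite lt /=.
have : colon_mon G w (var k) by rewrite HV; apply/existsP; exists k; rewrite kV varE eqxx.
by [].
Qed.

Lemma colon_main n (e : rel 'I_n) (e_irr : irreflexive e) (us1 : seq (mon n)) (u : mon n)
  (js js1 : seq 'I_n) (j0 : 'I_n)
  (Hus1 : forall u', u' \in us1 -> edge_mon e u') (Hu : edge_mon e u)
  (Hj0 : j0 \in js)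
  (LQ : us1 != [::] -> gen_by_vars (colon_mon us1 u))
  (Hv : mmul (var j0) u \notin products js us1 ++ [seq mmul (var j) u | j <- js1]) :
  gen_by_vars (fun m => in_mideal (products js us1 ++ [seq mmul (var j) u | j <- js1])
                                  (mmul m (mmul (var j0) u))).
Proof.
set E := products js us1 ++ _ in Hv *.
set v := mmul (var j0) u in Hv *.
have key : forall g, g \in E -> exists k, (v k < g k) && in_mideal E (mmul (var k) v).
  move=> g gE; have gnv : g != v by apply: contraNneq Hv => <-.
  move: gE; rewrite mem_cat => /orP [].
  - case/allpairsP => [[u' j]] /= [u'in jin Eg].
    have LQ' : gen_by_vars (colon_mon us1 u) by apply: LQ; case: (us1) u'in.
    have [k /andP [lt /hasP [u'' u''in /mdvdP dv]]] := gbv_elim LQ' u'in.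
    case: (eqVneq k j0) => [Ek | nk].
    + subst k; case: (ltnP (v j) (g j)) => [ltj | gej].
        exists j; rewrite ltj /=; apply/hasP; exists (mmul (var j) u'').
          by rewrite mem_cat; apply/orP; left; apply/allpairsP; exists (u'', j).
        apply/mdvdP => k'; move: (dv k'); rewrite /v !mmulE.
        move: (var j k') (var j0 k') (u'' k') (u k') => p q r s; lia.
      case: Hu => y [z [eyz Eu]]; case: (Hus1 _ u'in) => a [b [eab Eu']].
      have yz : y != z by apply: contraTneq eyz => ->; rewrite e_irr.
      subst u u' g.
      have [w /andP [ltw dw]] := final yz lt gej gnv.
      exists w; rewrite ltw /=; apply/hasP; exists (mmul (var j) (mmul (var a) (var b))) => //.
      by rewrite mem_cat; apply/orP; left; apply/allpairsP; exists (mmul (var a) (var b), j).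
    + exists k; apply/andP; split.
        rewrite Eg /v !mmulE !varE (negbTE nk).
        move: lt; move: (k == j) (u k) (u' k) => p q r lt; lia.
      apply/hasP; exists (mmul (var j0) u'').
        by rewrite mem_cat; apply/orP; left; apply/allpairsP; exists (u'', j0).
      apply/mdvdP => k'; move: (dv k'); rewrite /v !mmulE.
      move: (var k k') (var j0 k') (u'' k') (u k') => p q r s; lia.
  - case/mapP => j' j'in Eg.
    have nj : j' != j0 by apply: contraNneq gnv => E'; rewrite Eg E'.
    exists j'; apply/andP; split.
      by rewrite Eg /v !mmulE !varE eqxx (negbTE nj) add0n add1n ltnS leqnn.
    apply/hasP; exists g; first by rewrite mem_cat; apply/orP; right; rewrite Eg; apply/mapP; exists j'.
    apply/mdvdP => k'; rewrite Eg /v !mmulE.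
    move: (var j' k') (var j0 k') (u k') => p q r; lia.
exists [set k | in_mideal E (mmul (var k) v)] => m.
apply/idP/idP.
- case/hasP => g gE /mdvdP gm.
  have [k /andP [lt kin]] := key g gE.
  apply/existsP; exists k; rewrite inE kin /=.
  move: (gm k); rewrite mmulE; move: lt; move: (g k) (m k) (v k) => p q r lt H; lia.
- case/existsP => k /andP [kV mk]; rewrite inE in kV.
  case/hasP: kV => g gE gd; apply/hasP; exists g => //.
  apply: mdvd_trans gd _; apply/mdvdP => k'; rewrite !mmulE varE.
  by case: eqP => [->|_]; rewrite leq_add2r.
Qed.

Lemma deg_prod n (e : rel 'I_n) (us : seq (mon n)) (js : seq 'I_n)
  (H : forall u, u \in us -> edge_mon e u) g :
  g \in products js us -> deg g = 3.
Proof.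
case/allpairsP => [[u j]] /= [uin jin ->].
case: (H _ uin) => a [b [_ ->]].
by rewrite !deg_mmul !deg_var.
Qed.

Lemma mem_mingens n (e : rel 'I_n) (us : seq (mon n)) (js : seq 'I_n)
  (H : forall u, u \in us -> edge_mon e u) :
  mingens (products js us) =i products js us.
Proof.
move=> x; rewrite mem_filter mem_undup.
case xin: (x \in products js us); rewrite ?andbF // andbT.
apply/hasP => [[w win /andP [dw nwx]]].
move: nwx; rewrite (mdvd_deg dw) ?eqxx //.
by rewrite (deg_prod H win) (deg_prod H xin).
Qed.

Lemma decomp n (js : seq 'I_n) (us : seq (mon n)) q0 :
  q0 < size (products js us) ->
  exists us1 u us2 js1 j0 js2,
    [/\ us = us1 ++ u :: us2, js = js1 ++ j0 :: js2,
        take q0 (products js us) = products js us1 ++ [seq mmul (var j) u | j <- js1]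
      & nth (mon1 n) (products js us) q0 = mmul (var j0) u].
Proof.
elim: us q0 => [|u us IH] q0; first by [].
rewrite /products allpairs_cons -/(products js us) size_cat size_map => Hq.
case: (ltnP q0 (size js)) => Hs.
  case Ed: (drop q0 js) => [|j0 js2].
    by move: (size_drop q0 js); rewrite Ed /=; lia.
  have Ejs : js = take q0 js ++ j0 :: js2 by rewrite -Ed cat_take_drop.
  have St : size (take q0 js) = q0 by rewrite size_take Hs.
  exists [::], u, us, (take q0 js), j0, js2; split => //.
    by rewrite take_cat size_map Hs /= map_take.
  rewrite nth_cat size_map Hs.
  rewrite [in X in nth _ X _]Ejs map_cat nth_cat size_map St ltnn subnn //.
have Hq' : q0 - size js < size (products js us) by lia.
have [us1 [u1 [us2 [js1 [j0 [js2 [E1 E2 E3 E4]]]]]]] := IH _ Hq'.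
exists (u :: us1), u1, us2, js1, j0, js2; split.
- by rewrite E1.
- by [].
- by rewrite take_cat size_map ltnNge Hs /= E3 catA.
- by rewrite nth_cat size_map ltnNge Hs /= E4.
Qed.

Lemma gbv_ext n (J J' : mon n -> bool) : gen_by_vars J -> (forall m, J m = J' m) -> gen_by_vars J'.
Proof. by case=> V HV HJ; exists V => m; rewrite -HJ HV. Qed.

Theorem mainTheorem11 (n : nat) (e : rel 'I_n)
    (e_sym : symmetric e) (e_irr : irreflexive e)
    (us : seq (mon n))
    (us_uniq : uniq us)
    (us_gens : forall u, u \in us <-> edge_mon e u)
    (us_lq : linear_quotients us)
    (js : seq 'I_n) (js_sorted : sorted (fun a b : 'I_n => a < b) js)
    (ws : seq (mon n))
    (ws_gens : perm_eq ws (mingens (products js us)))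
    (ws_order : sorted (fun v v' => index v (products js us) < index v' (products js us)) ws) :
  linear_quotients ws.
Proof.
set pr := products js us in ws_gens ws_order *.
have Hed : forall u, u \in us -> edge_mon e u by move=> u /us_gens.
have memws : ws =i pr by move=> x; rewrite (perm_mem ws_gens) (mem_mingens _ Hed).
have uws : uniq ws by rewrite (perm_uniq ws_gens) filter_uniq // undup_uniq.
have tr : transitive (fun v v' => index v pr < index v' pr) by move=> ? ? ? ; apply: ltn_trans.
move=> i /andP [i0 isz].
set v := nth (mon1 n) ws i.
have vws : v \in ws by apply: mem_nth.
have vpr : v \in pr by rewrite -memws.
set q0 := index v pr.
have q0sz : q0 < size pr by rewrite index_mem.
have [us1 [u [us2 [js1 [j0 [js2 [E1 E2 E3 E4]]]]]]] := decomp q0sz.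
have Ev : v = mmul (var j0) u by rewrite -E4 nth_index.
have Htake : take i ws =i take q0 pr.
  move=> g; apply/idP/idP => gin.
    have gws : g \in ws by apply: mem_take gin.
    have gpr : g \in pr by rewrite -memws.
    rewrite (in_take _ gpr); rewrite (in_take _ gws) in gin.
    have := sorted_ltn_nth tr (mon1 n) ws_order.
    move=> /(_ (index g ws) i); rewrite !inE index_mem gws isz nth_index //.
    by apply.
  have gpr : g \in pr by apply: mem_take gin.
  have gws : g \in ws by rewrite memws.
  rewrite (in_take _ gpr) in gin; rewrite (in_take _ gws).
  rewrite ltnNge; apply/negP => le.
  case: (ltngtP i (index g ws)) le => // [lt _ | eq _].
    have := sorted_ltn_nth tr (mon1 n) ws_order.
    move=> /(_ i (index g ws)); rewrite !inE index_mem gws isz nth_index // => /(_ isT isT lt).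
    rewrite -/v -/q0 => H; lia.
  have gv : g = v by rewrite /v eq nth_index.
  by move: gin; rewrite gv -/q0 ltnn.
apply: (gbv_ext (J := fun m => in_mideal (products js us1 ++ [seq mmul (var j) u | j <- js1])
                                  (mmul m (mmul (var j0) u)))).
  apply: (colon_main e_irr (js := js) (js1 := js1)).
  - by move=> u' u'in; apply: Hed; rewrite E1 mem_cat u'in.
  - by apply: Hed; rewrite E1 mem_cat in_cons eqxx orbT.
  - by rewrite E2 mem_cat in_cons eqxx orbT.
  - move=> ne.
    have := us_lq (size us1).
    rewrite E1 take_size_cat // nth_cat ltnn subnn /=; apply.
    by rewrite size_cat /= lt0n size_eq0 ne /=; lia.
  - rewrite -E3 -Ev (in_take _ vpr) ltnn //.
move=> m; rewrite /colon_mon /in_mideal -E3 -Ev.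
by apply: eq_has_r => g; rewrite Htake.
Qed.
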